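(* Let $\rho>0$, $p\ge2$, and let $W:\mathbb{R}\to\mathbb{R}$ be a strictly convex $C^3$ function with $W''\ge c_0>0$, $W(u)\ge\max(0,c_1|u|^p-c_2)$ ($c_1,c_2>0$), and $W'(u)/|u|^p\to0$ as $|u|\to\infty$. For $N\in\{1,2,\dots\}$ let $\epsilon=2\pi/N$ and let $\{x_i(t)\}_{i=0}^{N-1}$ solve $\frac{d}{dt}(\epsilon\rho\dot x_i)=W'\big(\frac{x_{i+1}-x_i}{\epsilon}\big)-W'\big(\frac{x_i-x_{i-1}}{\epsilon}\big)$, with the periodic convention $x_{N+i}=x_i+2\pi$, so that the energy $\sum_{i=0}^{N-1}\big[\frac{\epsilon\rho}{2}\dot x_i^2+\epsilon W\big(\frac{x_{i+1}-x_i}{\epsilon}\big)\big]$ is constant in time. Define, with $I^i_\epsilon=[i\epsilon,(i+1)\epsilon)$, $$y^\epsilon(t,X)=\sum_{i=0}^{N-1}\Big(x_i+\frac{X-i\epsilon}{\epsilon}(x_{i+1}-x_i)\Big)\mathbf{1}_{I^i_\epsilon}(X),\qquad\tilde y^\epsilon(t,X)=\sum_{i=0}^{N-1}x_i\mathbf{1}_{I^i_\epsilon}(X).$$ Assume the initial data $\{(x_i(0),\dot x_i(0))\}_{i=0}^{N-1}$ are such that the energy is bounded by some $E_0<\infty$ independent of $N$. Then for each such $\epsilon$ the functions $y^\epsilon$ and $\partial_ty^\epsilon$ are bounded continuous functions of $(t,X)$, and there exists a constant $C=C(E_0,\rho,c_1,c_2)$ such that, with $Q=\mathbb{R}/2\pi\mathbb{Z}$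 (identified with $[0,2\pi)$), (i) $\sup_t\big(\|\partial_ty^\epsilon\|_{L^2(Q)}+\|\partial_Xy^\epsilon\|_{L^p(Q)}+\|\partial_t\tilde y^\epsilon\|_{L^2(Q)}\big)\le C$; (ii) $\sup_t\|\tilde y^\epsilon-y^\epsilon\|_{L^p(Q)}\le C\epsilon$. *)

(* Defs.v *)
From Stdlib Require Import Reals Lra ZArith.
From Coquelicot Require Import Coquelicot.
Open Scope R_scope.

Definition powr (x p : R) : R := if Rle_dec x 0 then 0 else Rpower x p.

Fixpoint sumR (n : nat) (f : nat -> R) : R :=
  match n with O => 0 | S m => sumR m f + f m end.

Definition ind (a b X : R) : R :=
  if Rle_dec a X then (if Rlt_dec X b then 1 else 0) else 0.

Definition epsN (N : nat) : R := 2 * PI / INR N.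

Definition xi (x : Z -> R -> R) (i : nat) (t : R) : R := x (Z.of_nat i) t.

Definition yeps (N : nat) (x : Z -> R -> R) (t X : R) : R :=
  let e := epsN N in
  sumR N (fun i => (xi x i t + (X - INR i * e) / e * (xi x (S i) t - xi x i t))
                   * ind (INR i * e) (INR (S i) * e) X).

Definition ytil (N : nat) (x : Z -> R -> R) (t X : R) : R :=
  let e := epsN N in
  sumR N (fun i => xi x i t * ind (INR i * e) (INR (S i) * e) X).

Definition LnormQ (q : R) (f : R -> R) : R :=
  powr (RInt (fun X => powr (Rabs (f X)) q) 0 (2 * PI)) (1 / q).

Definition energy (N : nat) (rho : R) (W : R -> R) (x : Z -> R -> R) (t : R) : R :=
  let e := epsN N in
  sumR N (fun i => e * rho / 2 * (Derive (xi x i) t) ^ 2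
                   + e * W ((xi x (S i) t - xi x i t) / e)).

Definition strictly_convex (W : R -> R) : Prop :=
  forall u v l, u <> v -> 0 < l < 1 ->
    W (l * u + (1 - l) * v) < l * W u + (1 - l) * W v.

(* Main.v *)
Require Import Defs.
From Stdlib Require Import Reals Lra Lia ZArith.
From Coquelicot Require Import Coquelicot.
Open Scope R_scope.

Lemma exp_le' x y : x <= y -> exp x <= exp y.
Proof. intros H; destruct (Rle_lt_or_eq_dec _ _ H). left; now apply exp_increasing. subst; lra. Qed.

Lemma ln_le0 y : 0 < y -> y <= 1 -> ln y <= 0.
Proof. intros H1 H2; destruct (Rle_lt_or_eq_dec _ _ H2).
  left; rewrite <- ln_1; now apply ln_increasing. subst; rewrite ln_1; lra. Qed.

Lemma ln_ge0 y : 1 <= y -> 0 <= ln y.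
Proof. intros H2; destruct (Rle_lt_or_eq_dec _ _ H2).
  left; rewrite <- ln_1; apply ln_increasing; lra. subst; rewrite ln_1; lra. Qed.

Lemma powr_nonneg a q : 0 <= powr a q.
Proof. unfold powr; destruct Rle_dec. lra. unfold Rpower; left; apply exp_pos. Qed.

Lemma powr_le_1plus a r : 0 < r <= 1 -> powr a r <= 1 + Rmax 0 a.
Proof. intros Hr. unfold powr; destruct Rle_dec.
  pose proof (Rmax_l 0 a); lra.
  rewrite Rmax_right by lra. unfold Rpower.
  destruct (Rle_dec a 1).
  - pose proof (ln_le0 a ltac:(lra) r0).
    assert (r * ln a <= 0) by nra. pose proof (exp_le' _ _ H0). rewrite exp_0 in H1. lra.
  - pose proof (ln_ge0 a ltac:(lra)).
    assert (r * ln a <= ln a) by nra. pose proof (exp_le' _ _ H0). rewrite exp_ln in H1; lra.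
Qed.

Lemma powr_mono a b q : 0 <= q -> a <= b -> powr a q <= powr b q.
Proof. intros Hq Hab. unfold powr. destruct (Rle_dec a 0).
  destruct Rle_dec. lra. unfold Rpower; left; apply exp_pos.
  destruct Rle_dec. lra. apply Rle_Rpower_l; lra. Qed.

Lemma powr_abs2 u : powr (Rabs u) 2 = u ^ 2.
Proof. unfold powr. destruct Rle_dec.
  assert (Rabs u = 0) by (pose proof (Rabs_pos u); lra).
  apply Rabs_eq_0 in H; subst; simpl; ring.
  replace 2 with (INR 2) by (simpl; ring). rewrite Rpower_pow by lra.
  rewrite <- (pow2_abs u). reflexivity. Qed.

Lemma powr_mul a b q : 0 < a -> 0 <= b -> powr (a * b) q = Rpower a q * powr b q.
Proof. intros Ha Hb. unfold powr. destruct (Rle_dec b 0).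
  assert (b = 0) by lra; subst. rewrite Rmult_0_r. destruct Rle_dec; lra.
  destruct Rle_dec. nra. rewrite Rpower_mult_distr; auto; lra. Qed.

Lemma powr_root e p K : 0 < e -> 0 < K -> 0 < p ->
  powr (Rpower e p * K) (1 / p) = e * powr K (1 / p).
Proof. intros He HK Hp. rewrite powr_mul. rewrite Rpower_mult.
  replace (p * (1/p)) with 1 by (field; lra). rewrite Rpower_1; auto.
  unfold Rpower; apply exp_pos. lra. Qed.

Lemma powr_small y p : 1 <= p -> Rabs y <= 1 -> powr y p <= Rabs y.
Proof. intros Hp Hy. unfold powr; destruct Rle_dec. apply Rabs_pos.
  rewrite Rabs_right in * by lra. unfold Rpower.
  pose proof (ln_le0 y ltac:(lra) Hy). assert (p * ln y <= ln y) by nra.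
  pose proof (exp_le' _ _ H0). rewrite exp_ln in H1; lra. Qed.

Lemma locally_R (x d : R) (P : R -> Prop) : 0 < d -> (forall y, Rabs (y - x) < d -> P y) -> locally x P.
Proof. intros Hd H. exists (mkposreal d Hd). intros y Hy. apply H. exact Hy. Qed.

Lemma powr_cont p u : 1 <= p -> continuous (fun y => powr y p) u.
Proof. intros Hp.
  destruct (Rtotal_order u 0) as [Hu|[Hu|Hu]].
  - apply continuous_ext_loc with (g := fun _ => 0).
    apply locally_R with (d := - u). lra. intros y Hy.
    unfold powr; destruct Rle_dec; auto. apply Rabs_def2 in Hy; lra.
    apply continuous_const.
  - subst. apply continuity_pt_filterlim.
    intros eps Heps. exists (Rmin 1 eps). split. apply Rmin_pos; lra.
    intros y [_ Hy]. simpl in *. unfold R_dist in *.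
    replace (powr 0 p) with 0 by (unfold powr; destruct Rle_dec; lra).
    rewrite Rminus_0_r in *. rewrite Rabs_right by (apply Rle_ge, powr_nonneg).
    pose proof (Rmin_l 1 eps); pose proof (Rmin_r 1 eps).
    pose proof (powr_small y p Hp ltac:(lra)). lra.
  - apply continuous_ext_loc with (g := fun y => exp (p * ln y)).
    apply locally_R with (d := u). lra. intros y Hy.
    unfold powr; destruct Rle_dec; auto. apply Rabs_def2 in Hy; lra.
    apply (ex_derive_continuous (K:=R_AbsRing) (V:=R_NormedModule)). auto_derive. lra.
Qed.

Lemma sumR_ext n f g : (forall i, (i < n)%nat -> f i = g i) -> sumR n f = sumR n g.
Proof. induction n; simpl; intros H; auto. rewrite IHn by (intros; apply H; lia). rewrite H by lia; auto. Qed.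

Lemma sumR_le n f g : (forall i, (i < n)%nat -> f i <= g i) -> sumR n f <= sumR n g.
Proof. induction n; simpl; intros H. lra. pose proof (IHn ltac:(intros; apply H; lia)). pose proof (H n ltac:(lia)). lra. Qed.

Lemma sumR_plus n f g : sumR n (fun i => f i + g i) = sumR n f + sumR n g.
Proof. induction n; simpl. ring. rewrite IHn; ring. Qed.

Lemma sumR_scal n c f : sumR n (fun i => c * f i) = c * sumR n f.
Proof. induction n; simpl. ring. rewrite IHn; ring. Qed.

Lemma sumR_const n c : sumR n (fun _ => c) = INR n * c.
Proof. induction n; simpl sumR. simpl; ring. rewrite IHn, S_INR; ring. Qed.

Lemma sumR_nonneg n f : (forall i, (i < n)%nat -> 0 <= f i) -> 0 <= sumR n f.
Proof. induction n; simpl; intros H. lra. pose proof (IHn ltac:(intros; apply H; lia)). pose proof (H n ltac:(lia)). lra. Qed.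

Lemma sumR_term n f j : (forall i, (i < n)%nat -> 0 <= f i) -> (j < n)%nat -> f j <= sumR n f.
Proof. induction n; simpl; intros H Hj. lia.
  destruct (Nat.eq_dec j n). subst. pose proof (sumR_nonneg n f ltac:(intros; apply H; lia)). lra.
  pose proof (IHn ltac:(intros; apply H; lia) ltac:(lia)). pose proof (H n ltac:(lia)). lra. Qed.

Lemma sumR_select n f i : (i < n)%nat -> (forall j, (j < n)%nat -> j <> i -> f j = 0) -> sumR n f = f i.
Proof. induction n; simpl; intros Hi H. lia.
  destruct (Nat.eq_dec i n). subst.
  rewrite (sumR_ext n f (fun _ => 0)). rewrite sumR_const; ring. intros; apply H; lia.
  rewrite IHn; [| lia | intros; apply H; lia]. rewrite (H n) by lia. ring. Qed.

Lemma sumR_shift n f : sumR n (fun i => f (S i)) + f O = sumR n f + f n.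
Proof. induction n; simpl sumR. ring. rewrite Rplus_assoc, (Rplus_comm (f (S n))), <- Rplus_assoc, IHn; ring. Qed.

Lemma sumR_tele n g : sumR n (fun i => g (S i) - g i) = g n - g O.
Proof. induction n; simpl. ring. rewrite IHn; ring. Qed.

Lemma sumR_abs n f : Rabs (sumR n f) <= sumR n (fun i => Rabs (f i)).
Proof. induction n; simpl. rewrite Rabs_R0; lra. eapply Rle_trans. apply Rabs_triang. lra. Qed.

Section Cells.
Variable e : R.
Hypothesis He : 0 < e.

Lemma cell_le j i : (j < i)%nat -> INR (S j) * e <= INR i * e.
Proof. intros H. apply Rmult_le_compat_r; [lra|]. apply le_INR; lia. Qed.

Lemma ind_cell_eq i X : INR i * e <= X < INR (S i) * e -> Defs.ind (INR i * e) (INR (S i) * e) X = 1.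
Proof. intros [H1 H2]; unfold Defs.ind; destruct Rle_dec; [|lra]. destruct Rlt_dec; lra. Qed.

Lemma ind_cell_neq i j X : INR i * e <= X < INR (S i) * e -> j <> i -> Defs.ind (INR j * e) (INR (S j) * e) X = 0.
Proof. intros [H1 H2] Hij; unfold Defs.ind. destruct (Nat.lt_ge_cases j i).
  pose proof (cell_le j i H). destruct Rle_dec; auto. destruct Rlt_dec; lra.
  assert (i < j)%nat by lia. pose proof (cell_le i j H0). destruct Rle_dec; lra. Qed.

Lemma select n F i X : (i < n)%nat -> INR i * e <= X < INR (S i) * e ->
  sumR n (fun j => F j * Defs.ind (INR j * e) (INR (S j) * e) X) = F i.
Proof. intros Hi HX. rewrite (sumR_select n _ i Hi). rewrite ind_cell_eq; auto; ring.
  intros j Hj Hji. rewrite (ind_cell_neq i j X HX Hji); ring. Qed.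

Lemma cell_exists n X : 0 <= X < INR n * e -> exists i, (i < n)%nat /\ INR i * e <= X < INR (S i) * e.
Proof. induction n; intros [H1 H2]. simpl in H2; lra.
  destruct (Rlt_dec X (INR n * e)). destruct (IHn ltac:(lra)) as [i [Hi HX]]. exists i; split; auto; lia.
  exists n; split; [lia|]. split; lra. Qed.

Definition cl (u : R) := Rmin e (Rmax 0 u).

Lemma cl_bound u : 0 <= cl u <= e.
Proof. unfold cl, Rmin, Rmax. repeat destruct Rle_dec; lra. Qed.

Lemma cl_lip u v : Rabs (cl u - cl v) <= Rabs (u - v).
Proof. unfold cl, Rmin, Rmax. unfold Rabs. repeat destruct Rle_dec; repeat destruct Rcase_abs; lra. Qed.

Definition Psi (n : nat) (a : nat -> R) (X : R) :=
  a O + sumR n (fun j => (a (S j) - a j) / e * cl (X - INR j * e)).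

Lemma repr1 n a X : INR n * e <= X ->
  sumR n (fun j => (a (S j) - a j) / e * cl (X - INR j * e)) = a n - a O.
Proof. intros H. rewrite <- sumR_tele. apply sumR_ext. intros j Hj.
  pose proof (cell_le j n Hj). rewrite S_INR in H0.
  unfold cl. rewrite Rmax_right by lra. rewrite Rmin_left by lra. field. lra. Qed.

Lemma repr2 n a i X : (i < n)%nat -> INR i * e <= X < INR (S i) * e ->
  sumR n (fun j => (a (S j) - a j) / e * cl (X - INR j * e))
  = a i - a O + (X - INR i * e) / e * (a (S i) - a i).
Proof. induction n; intros Hi HX. lia. simpl sumR.
  destruct (Nat.eq_dec i n). subst. rewrite repr1 by lra. rewrite S_INR in HX.
  unfold cl. rewrite Rmax_right by lra. rewrite Rmin_right by lra. field. lra.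
  rewrite IHn by (auto; lia). pose proof (cell_le i n ltac:(lia)).
  unfold cl. rewrite Rmax_left by lra. rewrite Rmin_right by lra. ring. Qed.

Lemma repr n a i X : (i < n)%nat -> INR i * e <= X < INR (S i) * e ->
  a i + (X - INR i * e) / e * (a (S i) - a i) = Psi n a X.
Proof. intros. unfold Psi. rewrite (repr2 n a i X H H0). ring. Qed.

Lemma Psi_diff n a b X X' D : (forall j, (j <= n)%nat -> Rabs (a j - b j) <= D) ->
  Rabs (Psi n a X' - Psi n b X) <= (1 + 2 * INR n) * D
    + sumR n (fun j => Rabs (b (S j) - b j) / e) * Rabs (X' - X).
Proof. intros HD. unfold Psi.
  assert (Hs : forall m, (m <= n)%nat ->
    Rabs (sumR m (fun j => (a (S j) - a j) / e * cl (X' - INR j * e))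
          - sumR m (fun j => (b (S j) - b j) / e * cl (X - INR j * e)))
    <= 2 * INR m * D + sumR m (fun j => Rabs (b (S j) - b j) / e) * Rabs (X' - X)).
  { induction m; intros Hm. simpl. rewrite Rminus_0_r, Rabs_R0. pose proof (Rabs_pos (X' - X)). lra.
    simpl sumR. rewrite S_INR.
    pose proof (IHm ltac:(lia)).
    set (u := cl (X' - INR m * e)). set (w := cl (X - INR m * e)).
    assert (Hu := cl_bound (X' - INR m * e)). assert (Hl := cl_lip (X' - INR m * e) (X - INR m * e)).
    fold u w in Hu, Hl. replace (X' - INR m * e - (X - INR m * e)) with (X' - X) in Hl by ring.
    assert (H1 := HD (S m) ltac:(lia)). assert (H2 := HD m ltac:(lia)).
    replace ((a (S m) - a m) / e * u - (b (S m) - b m) / e * w)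
      with (((a (S m) - b (S m)) - (a m - b m)) * (u / e) + (b (S m) - b m) / e * (u - w)) by (field; lra).
    assert (Rabs (((a (S m) - b (S m)) - (a m - b m)) * (u / e)) <= 2 * D).
    { rewrite Rabs_mult. assert (Rabs (u / e) <= 1). rewrite Rabs_right. apply Rmult_le_reg_r with e; auto.
        unfold Rdiv; rewrite Rmult_assoc, Rinv_l; lra. apply Rle_ge; apply Rmult_le_pos; [lra|]. left; apply Rinv_0_lt_compat; lra.
      pose proof (Rabs_triang_inv2 (a (S m) - b (S m)) (a m - b m)).
      assert (Rabs ((a (S m) - b (S m)) - (a m - b m)) <= 2 * D).
      { replace ((a (S m) - b (S m)) - (a m - b m)) with ((a (S m) - b (S m)) + - (a m - b m)) by ring. eapply Rle_trans. apply Rabs_triang. rewrite Rabs_Ropp. lra. }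
      pose proof (Rabs_pos (u/e)). pose proof (Rabs_pos ((a (S m) - b (S m)) - (a m - b m))). nra. }
    assert (Rabs ((b (S m) - b m) / e * (u - w)) <= Rabs (b (S m) - b m) / e * Rabs (X' - X)).
    { rewrite Rabs_mult. unfold Rdiv. rewrite Rabs_mult. rewrite (Rabs_right (/ e)) by (left; apply Rinv_0_lt_compat; lra).
      apply Rmult_le_compat_l. apply Rmult_le_pos. apply Rabs_pos. left; apply Rinv_0_lt_compat; lra. auto. }
    match goal with |- Rabs ?L <= _ => replace L with
      ((sumR m (fun j => (a (S j) - a j) / e * cl (X' - INR j * e))
          - sumR m (fun j => (b (S j) - b j) / e * cl (X - INR j * e))) +
       ((((a (S m) - b (S m)) - (a m - b m)) * (u / e) + (b (S m) - b m) / e * (u - w)))) by (field; lra) end.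
    eapply Rle_trans. apply Rabs_triang. eapply Rle_trans. apply Rplus_le_compat_l. apply Rabs_triang. lra. }
  pose proof (Hs n (le_n n)). pose proof (HD O ltac:(lia)).
  match goal with |- Rabs ?L <= _ => replace L with ((a O - b O) +
      (sumR n (fun j => (a (S j) - a j) / e * cl (X' - INR j * e))
          - sumR n (fun j => (b (S j) - b j) / e * cl (X - INR j * e)))) by ring end.
  eapply Rle_trans. apply Rabs_triang. lra. Qed.

End Cells.

Lemma int_cells e (He : 0 < e) (g : R -> R) (h : nat -> R -> R) (b : nat -> R) n :
  (forall i X, (i < n)%nat -> INR i * e <= X <= INR (S i) * e -> continuous (h i) X) ->
  (forall i X, (i < n)%nat -> INR i * e < X < INR (S i) * e -> g X = h i X) ->
  (forall i X, (i < n)%nat -> INR i * e < X < INR (S i) * e -> h i X <= b i) ->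
  ex_RInt g 0 (INR n * e) /\ RInt g 0 (INR n * e) <= sumR n (fun i => e * b i).
Proof.
  induction n; intros Hc Hg Hb.
  - simpl. rewrite Rmult_0_l. split. apply ex_RInt_point. rewrite RInt_point. apply Req_le; reflexivity.
  - destruct IHn as [Hex Hle]; [intros; apply Hc; auto; lia | intros; apply Hg; auto; lia | intros; apply Hb; auto; lia |].
    assert (Hab : INR n * e <= INR (S n) * e) by (rewrite S_INR; lra).
    assert (Hh : ex_RInt (h n) (INR n * e) (INR (S n) * e)).
    { apply (ex_RInt_continuous (V:=R_CompleteNormedModule)). intros z Hz. rewrite Rmin_left, Rmax_right in Hz by lra. apply Hc; auto. }
    assert (Hgc : ex_RInt g (INR n * e) (INR (S n) * e)).
    { apply ex_RInt_ext with (h n); auto. intros x Hx. rewrite Rmin_left, Rmax_right in Hx by lra. symmetry; apply Hg; auto. }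
    split. apply ex_RInt_Chasles with (INR n * e); auto.
    rewrite <- (RInt_Chasles g 0 (INR n * e) (INR (S n) * e)) by auto.
    assert (RInt g (INR n * e) (INR (S n) * e) <= e * b n).
    { eapply Rle_trans. apply RInt_le with (g := fun _ => b n); auto. apply ex_RInt_const.
      intros x Hx. rewrite (Hg n x) by (auto; lia). apply Hb; auto.
      rewrite RInt_const, S_INR. unfold scal; simpl; unfold mult; simpl. lra. }
    simpl sumR. unfold plus. change (RInt g 0 (INR n * e) + RInt g (INR n * e) (INR (S n) * e) <= sumR n (fun i => e * b i) + e * b n). lra.
Qed.

Lemma is_derive_eq (f : R -> R) t l l' : is_derive f t l -> l = l' -> is_derive f t l'.
Proof. intros H ->; exact H. Qed.

Lemma is_derive_sumR n (f : nat -> R -> R) df t :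
  (forall i, (i < n)%nat -> is_derive (f i) t (df i)) ->
  is_derive (fun s => sumR n (fun i => f i s)) t (sumR n df).
Proof. induction n; intros H; simpl.
  - apply is_derive_eq with (zero : R). apply (is_derive_const (K:=R_AbsRing) (V:=R_NormedModule)). reflexivity.
  - apply is_derive_eq with (plus (sumR n df) (df n)). apply (is_derive_plus (K:=R_AbsRing) (V:=R_NormedModule)
      (fun s => sumR n (fun i => f i s)) (f n)). apply IHn; intros; apply H; lia. apply H; lia. reflexivity.
Qed.

Lemma epsN_pos N : (1 <= N)%nat -> 0 < epsN N.
Proof. intros H. unfold epsN. apply Rdiv_lt_0_compat. pose proof PI_RGT_0; lra. apply lt_0_INR; lia. Qed.

Lemma epsN_tot N : (1 <= N)%nat -> INR N * epsN N = 2 * PI.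
Proof. intros H. unfold epsN. field. apply not_0_INR; lia. Qed.

Lemma cont_Rle f t : continuous f t -> continuity_pt f t.
Proof. intros H; apply continuity_pt_filterlim; exact H. Qed.

Section Sys.
Variables (N : nat) (x : Z -> R -> R) (rho : R) (W : R -> R).
Hypothesis HN : (1 <= N)%nat.
Hypothesis Hrho : 0 < rho.
Hypothesis Hper : forall i t, x (i + Z.of_nat N)%Z t = x i t + 2 * PI.
Hypothesis Hder : forall i t, ex_derive (x i) t.
Hypothesis HW1 : forall u, ex_derive W u.
Hypothesis Heq : forall i t,
        is_derive (fun s => epsN N * rho * Derive (x i) s) t
          (Derive W ((x (i + 1)%Z t - x i t) / epsN N)
           - Derive W ((x i t - x (i - 1)%Z t) / epsN N)).

Lemma vdd i t : is_derive (fun s => Derive (x i) s) t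
   ((Derive W ((x (i + 1)%Z t - x i t) / epsN N)
           - Derive W ((x i t - x (i - 1)%Z t) / epsN N)) / (epsN N * rho)).
Proof. pose proof (epsN_pos N HN).
  eapply is_derive_eq. eapply is_derive_ext. 2: apply (is_derive_scal (fun s => epsN N * rho * Derive (x i) s) t (/ (epsN N * rho))), Heq.
  intros s; simpl. field. split; lra. simpl. unfold Rdiv; ring. Qed.

Lemma v_cont i t : continuous (fun s => Derive (x i) s) t.
Proof. apply (ex_derive_continuous (K:=R_AbsRing) (V:=R_NormedModule)). eexists; apply vdd. Qed.

Lemma x_cont i t : continuous (x i) t.
Proof. apply (ex_derive_continuous (K:=R_AbsRing) (V:=R_NormedModule)). apply Hder. Qed.

Lemma v_per t : Derive (xi x N) t = Derive (xi x O) t.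
Proof. unfold xi. rewrite (Derive_ext _ (fun s => x 0%Z s + 2 * PI)).
  apply is_derive_unique. apply is_derive_eq with (plus (Derive (x 0%Z) t) zero).
  apply (is_derive_plus (K:=R_AbsRing) (V:=R_NormedModule) (x 0%Z) (fun _ => 2 * PI)).
  apply Derive_correct, Hder. apply (is_derive_const (K:=R_AbsRing) (V:=R_NormedModule)). apply plus_zero_r.
  intros s. rewrite <- Hper. reflexivity. Qed.

Definition Gk t (k : nat) := Derive W ((x (Z.of_nat k) t - x (Z.of_nat k - 1)%Z t) / epsN N) * Derive (x (Z.of_nat k)) t.

Lemma term_deriv i t :
  is_derive (fun s => epsN N * rho / 2 * (Derive (xi x i) s) ^ 2
                   + epsN N * W ((xi x (S i) s - xi x i s) / epsN N)) t (Gk t (S i) - Gk t i).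
Proof. pose proof (epsN_pos N HN).
  assert (Hd := vdd (Z.of_nat i) t).
  unfold xi. auto_derive.
  - repeat split; auto; try (eexists; exact Hd); try apply HW1.
  - change (Z.pos (Pos.of_succ_nat i)) with (Z.of_nat (S i)).
    erewrite (is_derive_unique (fun x0 : R => Derive (fun t : R => x (Z.of_nat i) t) x0) t); [| exact Hd].
    change (fun x0 : R => x (Z.of_nat (S i)) x0) with (x (Z.of_nat (S i))).
    change (fun x0 : R => x (Z.of_nat i) x0) with (x (Z.of_nat i)).
    change (fun t : R => x (Z.of_nat i) t) with (x (Z.of_nat i)).
    change (fun x : R => W x) with W.
    unfold Gk.
    replace (Z.of_nat (S i) - 1)%Z with (Z.of_nat i) by lia.
    replace (Z.of_nat i + 1)%Z with (Z.of_nat (S i)) by lia.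
    change ((x (Z.of_nat (S i)) t + - x (Z.of_nat i) t) * / epsN N) with ((x (Z.of_nat (S i)) t - x (Z.of_nat i) t) / epsN N).
    set (A := Derive W ((x (Z.of_nat (S i)) t - x (Z.of_nat i) t) / epsN N)).
    set (B := Derive W ((x (Z.of_nat i) t - x (Z.of_nat i - 1) t) / epsN N)).
    set (v1 := Derive (x (Z.of_nat (S i))) t). set (v0 := Derive (x (Z.of_nat i)) t).
    field. split; lra.
Qed.

Lemma energy_deriv t : is_derive (energy N rho W x) t 0.
Proof.
  apply is_derive_eq with (sumR N (fun i => Gk t (S i) - Gk t i)).
  { eapply is_derive_ext. 2: apply (is_derive_sumR N (fun i s => epsN N * rho / 2 * (Derive (xi x i) s) ^ 2 + epsN N * W ((xi x (S i) s - xi x i s) / epsN N))).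
    intros s; reflexivity. intros; apply term_deriv. }
  rewrite (sumR_tele N (Gk t)). unfold Gk.
  assert (E1 := Hper 0%Z t). assert (E2 := Hper (-1)%Z t).
  replace (Z.of_nat N - 1)%Z with (-1 + Z.of_nat N)%Z by lia.
  replace (Z.of_nat N) with (0 + Z.of_nat N)%Z at 1 by lia. rewrite E1, E2.
  replace (x 0%Z t + 2 * PI - (x (-1)%Z t + 2 * PI)) with (x 0%Z t - x (-1)%Z t) by ring.
  assert (H : Derive (x (Z.of_nat N)) t = Derive (x 0%Z) t) by exact (v_per t). rewrite H. simpl. ring.
Qed.

Lemma energy_const t : energy N rho W x t = energy N rho W x 0.
Proof.
  destruct (MVT_gen (energy N rho W x) 0 t (fun _ => 0)) as [c [_ Hc]].
  intros; apply energy_deriv.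
  intros; apply cont_Rle. apply (ex_derive_continuous (K:=R_AbsRing) (V:=R_NormedModule)). eexists; apply energy_deriv.
  lra.
Qed.

End Sys.

Section Cellf.
Variables (N : nat) (x : Z -> R -> R).
Hypothesis HN : (1 <= N)%nat.
Hypothesis Hder : forall i t, ex_derive (x i) t.

Lemma yeps_cell i s X : (i < N)%nat -> INR i * epsN N <= X < INR (S i) * epsN N ->
  yeps N x s X = xi x i s + (X - INR i * epsN N) / epsN N * (xi x (S i) s - xi x i s).
Proof. intros Hi HX. unfold yeps; cbv zeta. apply (select (epsN N) (epsN_pos N HN) N (fun j => xi x j s + (X - INR j * epsN N) / epsN N * (xi x (S j) s - xi x j s)) i X Hi HX). Qed.

Lemma ytil_cell i s X : (i < N)%nat -> INR i * epsN N <= X < INR (S i) * epsN N ->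
  ytil N x s X = xi x i s.
Proof. intros Hi HX. unfold ytil; cbv zeta. apply (select (epsN N) (epsN_pos N HN) N (fun j => xi x j s) i X Hi HX). Qed.

Lemma dyeps_cell i t X : (i < N)%nat -> INR i * epsN N <= X < INR (S i) * epsN N ->
  Derive (fun s => yeps N x s X) t = Derive (xi x i) t + (X - INR i * epsN N) / epsN N * (Derive (xi x (S i)) t - Derive (xi x i) t).
Proof. intros Hi HX. rewrite (Derive_ext _ (fun s => xi x i s + (X - INR i * epsN N) / epsN N * (xi x (S i) s - xi x i s))).
  2: intros; apply yeps_cell; auto.
  apply is_derive_unique. unfold xi. auto_derive. repeat split; apply Hder. change (Z.pos (Pos.of_succ_nat i)) with (Z.of_nat (S i)). match goal with |- @eq _ ?a ?b => change (@eq R a b) end. ring. Qed.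

Lemma dytil_cell i t X : (i < N)%nat -> INR i * epsN N <= X < INR (S i) * epsN N ->
  Derive (fun s => ytil N x s X) t = Derive (xi x i) t.
Proof. intros Hi HX. rewrite (Derive_ext _ (fun s => xi x i s)). reflexivity.
  intros; apply ytil_cell; auto. Qed.

Lemma dXyeps_cell i t X : (i < N)%nat -> INR i * epsN N < X < INR (S i) * epsN N ->
  Derive (fun Z => yeps N x t Z) X = (xi x (S i) t - xi x i t) / epsN N.
Proof. intros Hi HX. apply is_derive_unique.
  apply is_derive_ext_loc with (fun Z => xi x i t + (Z - INR i * epsN N) / epsN N * (xi x (S i) t - xi x i t)).
  apply locally_R with (d := Rmin (X - INR i * epsN N) (INR (S i) * epsN N - X)).
  apply Rmin_pos; lra. intros y Hy. symmetry. apply yeps_cell; auto.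
  pose proof (Rmin_l (X - INR i * epsN N) (INR (S i) * epsN N - X)).
  pose proof (Rmin_r (X - INR i * epsN N) (INR (S i) * epsN N - X)).
  apply Rabs_def2 in Hy. lra.
  pose proof (epsN_pos N HN). auto_derive. lra. field. lra. Qed.

End Cellf.

Lemma cont_ed (f : R -> R) t : continuous f t -> forall eps, 0 < eps ->
  exists d, 0 < d /\ forall t', Rabs (t' - t) < d -> Rabs (f t' - f t) < eps.
Proof. intros H eps Heps. apply cont_Rle in H.
  destruct (H eps Heps) as [d [Hd Hf]]. exists d; split; auto. intros t' Ht'.
  destruct (Req_dec t' t). subst. rewrite Rminus_eq_0, Rabs_R0; auto.
  apply (Hf t'). split. split. exact I. auto. simpl. unfold R_dist. auto. Qed.

Lemma fam_cont (f : nat -> R -> R) n t : (forall j, (j <= n)%nat -> continuous (f j) t) ->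
  forall eps, 0 < eps -> exists d, 0 < d /\ forall t', Rabs (t' - t) < d ->
    forall j, (j <= n)%nat -> Rabs (f j t' - f j t) < eps.
Proof. induction n; intros H eps Heps.
  - destruct (cont_ed (f O) t (H O (le_n O)) eps Heps) as [d [Hd Hf]]. exists d; split; auto.
    intros t' Ht' j Hj. assert (j = O) by lia. subst. auto.
  - destruct (IHn ltac:(intros; apply H; lia) eps Heps) as [d1 [Hd1 Hf1]].
    destruct (cont_ed (f (S n)) t (H (S n) (le_n _)) eps Heps) as [d2 [Hd2 Hf2]].
    exists (Rmin d1 d2). split. apply Rmin_pos; auto. intros t' Ht' j Hj.
    pose proof (Rmin_l d1 d2). pose proof (Rmin_r d1 d2).
    destruct (Nat.eq_dec j (S n)). subst. apply Hf2; lra. apply Hf1; [lra | lia]. Qed.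

Lemma conv_abs c d l : 0 <= l <= 1 -> Rabs (c + l * (d - c)) <= Rabs c + Rabs d.
Proof. intros Hl. replace (c + l * (d - c)) with ((1 - l) * c + l * d) by ring.
  eapply Rle_trans. apply Rabs_triang. rewrite !Rabs_mult. rewrite (Rabs_right (1 - l)) by lra. rewrite (Rabs_right l) by lra.
  pose proof (Rabs_pos c); pose proof (Rabs_pos d). nra. Qed.

Lemma conv_sq c d l : 0 <= l <= 1 -> (c + l * (d - c)) ^ 2 <= c ^ 2 + d ^ 2.
Proof. intros Hl. replace (c + l * (d - c)) with ((1 - l) * c + l * d) by ring.
  assert (((1 - l) * c + l * d) ^ 2 <= (1 - l) * c ^ 2 + l * d ^ 2).
  { assert (0 <= l * (1 - l) * (c - d) ^ 2) by (apply Rmult_le_pos; [nra | apply pow2_ge_0]). nra. }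
  pose proof (pow2_ge_0 c); pose proof (pow2_ge_0 d). nra. Qed.

Lemma Rmax0_mono a b : a <= b -> Rmax 0 a <= Rmax 0 b.
Proof. intros H. unfold Rmax; repeat destruct Rle_dec; lra. Qed.

Lemma abs_le_sq v : Rabs v <= 1 + v ^ 2.
Proof. rewrite <- (pow2_abs v). pose proof (Rabs_pos v). nra. Qed.

Lemma lam_bound e i X : 0 < e -> INR i * e <= X < INR (S i) * e -> 0 <= (X - INR i * e) / e <= 1.
Proof. intros He HX. rewrite S_INR in HX. split.
  apply Rmult_le_pos; [lra | left; apply Rinv_0_lt_compat; lra].
  apply Rmult_le_reg_r with e; auto. unfold Rdiv; rewrite Rmult_assoc, Rinv_l; lra. Qed.

Lemma LnormQ_le q f Bd : 1 <= q -> RInt (fun X => powr (Rabs (f X)) q) 0 (2 * PI) <= Bd ->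
  LnormQ q f <= 1 + Rmax 0 Bd.
Proof. intros Hq H. unfold LnormQ. eapply Rle_trans. apply powr_le_1plus.
  split. apply Rdiv_lt_0_compat; lra. apply Rmult_le_reg_r with q. lra.
  unfold Rdiv; rewrite Rmult_assoc, Rinv_l; lra.
  apply Rplus_le_compat_l, Rmax0_mono; auto. Qed.

Theorem lemma5p1 :
  forall (rho c1 c2 E0 : R), 0 < rho -> 0 < c1 -> 0 < c2 ->
  exists C : R,
  forall (p c0 : R) (W : R -> R),
    2 <= p -> 0 < c0 ->
    (forall u, ex_derive_n W 1 u /\ ex_derive_n W 2 u /\ ex_derive_n W 3 u
               /\ continuous (Derive_n W 3) u) ->
    strictly_convex W ->
    (forall u, c0 <= Derive_n W 2 u) ->
    (forall u, Rmax 0 (c1 * powr (Rabs u) p - c2) <= W u) ->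
    (forall d, 0 < d -> exists M, forall u, M < Rabs u ->
        Rabs (Derive W u / powr (Rabs u) p) < d) ->
  forall (N : nat) (x : Z -> R -> R),
    (1 <= N)%nat ->
    (forall i t, x (i + Z.of_nat N)%Z t = x i t + 2 * PI) ->
    (forall i t, ex_derive (x i) t) ->
    (forall i t,
        is_derive (fun s => epsN N * rho * Derive (x i) s) t
          (Derive W ((x (i + 1)%Z t - x i t) / epsN N)
           - Derive W ((x i t - x (i - 1)%Z t) / epsN N))) ->
    energy N rho W x 0 <= E0 ->
    (forall t X, 0 <= X < 2 * PI -> forall e, 0 < e -> exists d, 0 < d /\
        forall t' X', 0 <= X' < 2 * PI -> Rabs (t' - t) < d -> Rabs (X' - X) < d ->
          Rabs (yeps N x t' X' - yeps N x t X) < e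
          /\ Rabs (Derive (fun s => yeps N x s X') t'
                   - Derive (fun s => yeps N x s X) t) < e) /\
    (forall T, exists B, forall t X, Rabs t <= T -> 0 <= X < 2 * PI ->
        Rabs (yeps N x t X) <= B) /\
    (exists B, forall t X, 0 <= X < 2 * PI ->
        Rabs (Derive (fun s => yeps N x s X) t) <= B) /\
    (forall t,
        LnormQ 2 (fun X => Derive (fun s => yeps N x s X) t)
        + LnormQ p (fun X => Derive (fun Z => yeps N x t Z) X)
        + LnormQ 2 (fun X => Derive (fun s => ytil N x s X) t) <= C) /\
    (forall t, LnormQ p (fun X => ytil N x t X - yeps N x t X) <= C * epsN N).
Proof.
  intros rho c1 c2 E0 Hrho Hc1 Hc2.
  set (K := (Rabs E0 + 2 * PI * c2) / c1).
  assert (HK : 0 < K). { unfold K. apply Rdiv_lt_0_compat; auto. pose proof (Rabs_pos E0). pose proof PI_RGT_0. nra. }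
  exists (5 + 6 * Rabs E0 / rho + 2 * K).
  intros p c0 W Hp Hc0 HW3 Hconv HW2 Hlow Hgrow N x HN Hper Hder Heq HE0.
  assert (HW1 : forall u, ex_derive W u) by (intros u; destruct (HW3 u) as [H _]; exact H).
  assert (He := epsN_pos N HN). assert (Htot := epsN_tot N HN).
  set (e := epsN N) in *.
  assert (HWnn : forall u, 0 <= W u) by (intros u; eapply Rle_trans; [apply Rmax_l | apply Hlow]).
  assert (HEt : forall t, energy N rho W x t <= E0).
  { intros t. rewrite (energy_const N x rho W HN Hrho Hper Hder HW1 Heq). auto. }
  set (v := fun j t => Derive (xi x j) t).
  set (s := fun j t => (xi x (S j) t - xi x j t) / e).
  assert (Hsplit : forall t, energy N rho W x t =
     sumR N (fun i => e * rho / 2 * (v i t) ^ 2) + sumR N (fun i => e * W (s i t))).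
  { intros t. unfold energy; cbv zeta. apply sumR_plus. }
  assert (Hkin : forall t, sumR N (fun i => e * rho / 2 * (v i t) ^ 2) <= Rabs E0).
  { intros t. pose proof (Hsplit t). pose proof (HEt t). pose proof (Rle_abs E0).
    pose proof (sumR_nonneg N (fun i => e * W (s i t)) ltac:(intros; apply Rmult_le_pos; [lra | apply HWnn])). lra. }
  assert (Hpot : forall t, sumR N (fun i => e * W (s i t)) <= Rabs E0).
  { intros t. pose proof (Hsplit t). pose proof (HEt t). pose proof (Rle_abs E0).
    pose proof (sumR_nonneg N (fun i => e * rho / 2 * (v i t) ^ 2) ltac:(intros; apply Rmult_le_pos; [nra | apply pow2_ge_0])). lra. }
  assert (HK1 : forall t, sumR N (fun i => e * (v i t) ^ 2) <= 2 * Rabs E0 / rho).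
  { intros t. rewrite (sumR_ext N _ (fun i => (2 / rho) * (e * rho / 2 * (v i t) ^ 2))).
    rewrite sumR_scal. pose proof (Hkin t). apply Rmult_le_reg_l with (rho / 2). lra.
    field_simplify; try lra. intros; field; lra. }
  assert (Hvper : forall t, v N t = v O t) by (intros; apply (v_per N x Hper Hder)).
  set (V := 1 + 2 * Rabs E0 / (e * rho)).
  assert (HV : forall t j, (j <= N)%nat -> Rabs (v j t) <= V).
  { assert (forall t j, (j < N)%nat -> Rabs (v j t) <= V).
    { intros t j Hj. eapply Rle_trans. apply abs_le_sq. unfold V. apply Rplus_le_compat_l.
      pose proof (sumR_term N (fun i => e * rho / 2 * (v i t) ^ 2) j ltac:(intros; apply Rmult_le_pos; [nra | apply pow2_ge_0]) Hj).
      pose proof (Hkin t). cbv beta in H.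
      apply Rmult_le_reg_l with (e * rho / 2). nra. replace (e * rho / 2 * (2 * Rabs E0 / (e * rho))) with (Rabs E0) by (field; lra). lra. }
    intros t j Hj. destruct (Nat.eq_dec j N). subst. rewrite Hvper. apply H; lia. apply H; lia. }
  assert (HP : forall t, sumR N (fun i => e * powr (Rabs (s i t)) p) <= K).
  { intros t. eapply Rle_trans. apply sumR_le with (g := fun i => / c1 * (e * W (s i t)) + / c1 * (e * c2)).
    { intros i Hi. pose proof (Hlow (s i t)). pose proof (Rmax_r 0 (c1 * powr (Rabs (s i t)) p - c2)).
      apply Rmult_le_reg_l with c1; auto. field_simplify; try lra. nra. }
    rewrite sumR_plus, !sumR_scal, sumR_const. pose proof (Hpot t). rewrite sumR_scal in H. unfold K.
    replace (e * (INR N * c2)) with (2 * PI * c2) by (rewrite <- Htot; ring).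
    unfold Rdiv. rewrite <- Rmult_plus_distr_l. rewrite (Rmult_comm _ (/ c1)).
    apply Rmult_le_compat_l. left; apply Rinv_0_lt_compat; auto. lra. }
  assert (Hcell : forall X, 0 <= X < 2 * PI -> exists i, (i < N)%nat /\ INR i * e <= X < INR (S i) * e).
  { intros X HX. apply cell_exists; auto. rewrite Htot; auto. }
  assert (Hrep_y : forall s0 X, 0 <= X < 2 * PI -> yeps N x s0 X = Psi e N (fun j => xi x j s0) X).
  { intros s0 X HX. destruct (Hcell X HX) as [i [Hi HXi]]. rewrite (yeps_cell N x HN i s0 X Hi HXi).
    apply (repr e He N (fun j => xi x j s0) i X Hi HXi). }
  assert (Hrep_dy : forall s0 X, 0 <= X < 2 * PI -> Derive (fun s1 => yeps N x s1 X) s0 = Psi e N (fun j => v j s0) X).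
  { intros s0 X HX. destruct (Hcell X HX) as [i [Hi HXi]]. rewrite (dyeps_cell N x HN Hder i s0 X Hi HXi).
    apply (repr e He N (fun j => v j s0) i X Hi HXi). }
  assert (HVpos : 1 <= V). { unfold V. pose proof (Rabs_pos E0). assert (0 <= 2 * Rabs E0 / (e * rho)).
    apply Rmult_le_pos. lra. left; apply Rinv_0_lt_compat; nra. lra. }
  split; [| split; [| split; [| split]]].
  -
    intros t X HX eps Heps.
    set (D := eps / (2 * (1 + 2 * INR N))).
    assert (HD : 0 < D). { unfold D. apply Rdiv_lt_0_compat; auto. pose proof (pos_INR N). lra. }
    destruct (fam_cont (fun j => xi x j) N t ltac:(intros; apply (x_cont x Hder)) D HD) as [d1 [Hd1 Hf1]].
    destruct (fam_cont v N t ltac:(intros; apply (v_cont N x rho W HN Hrho Heq)) D HD) as [d2 [Hd2 Hf2]].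
    set (La := sumR N (fun j => Rabs (xi x (S j) t - xi x j t) / e)).
    set (Lb := sumR N (fun j => Rabs (v (S j) t - v j t) / e)).
    assert (HLa : 0 <= La). { apply sumR_nonneg. intros; apply Rmult_le_pos. apply Rabs_pos. left; apply Rinv_0_lt_compat; lra. }
    assert (HLb : 0 <= Lb). { apply sumR_nonneg. intros; apply Rmult_le_pos. apply Rabs_pos. left; apply Rinv_0_lt_compat; lra. }
    set (d3 := eps / (2 * (La + Lb + 1))).
    assert (Hd3 : 0 < d3) by (unfold d3; apply Rdiv_lt_0_compat; lra).
    assert (Hk : (1 + 2 * INR N) * D = eps / 2). { unfold D. field. pose proof (pos_INR N). lra. }
    assert (HLd : (La + Lb) * d3 < eps / 2). { unfold d3. apply Rmult_lt_reg_r with (2 * (La + Lb + 1)). lra.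
      replace ((La + Lb) * (eps / (2 * (La + Lb + 1))) * (2 * (La + Lb + 1))) with ((La + Lb) * eps) by (field; lra). nra. }
    exists (Rmin d1 (Rmin d2 d3)). split. apply Rmin_pos; auto. apply Rmin_pos; auto.
    intros t' X' HX' Ht HXX.
    pose proof (Rmin_l d1 (Rmin d2 d3)). pose proof (Rmin_r d1 (Rmin d2 d3)).
    pose proof (Rmin_l d2 d3). pose proof (Rmin_r d2 d3).
    assert (HX3 : Rabs (X' - X) <= d3) by lra.
    split.
    + rewrite (Hrep_y t' X' HX'), (Hrep_y t X HX). eapply Rle_lt_trans.
      apply (Psi_diff e He N (fun j => xi x j t') (fun j => xi x j t) X X' D).
      intros j Hj; left; apply (Hf1 t'); auto; lra.
      fold La. pose proof (Rabs_pos (X' - X)). nra.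
    + rewrite (Hrep_dy t' X' HX'), (Hrep_dy t X HX). eapply Rle_lt_trans.
      apply (Psi_diff e He N (fun j => v j t') (fun j => v j t) X X' D).
      intros j Hj; left; apply (Hf2 t'); auto; lra.
      fold Lb. pose proof (Rabs_pos (X' - X)). nra.
  -
    intros T. exists (2 * sumR (S N) (fun j => Rabs (xi x j 0) + V * T)).
    intros t X Ht HX.
    assert (HT : 0 <= T) by (pose proof (Rabs_pos t); lra).
    assert (Hnn : forall j, (j < S N)%nat -> 0 <= Rabs (xi x j 0) + V * T).
    { intros; pose proof (Rabs_pos (xi x j 0)); nra. }
    assert (HxB : forall j, (j <= N)%nat -> Rabs (xi x j t) <= Rabs (xi x j 0) + V * T).
    { intros j Hj. destruct (MVT_gen (xi x j) 0 t (v j)) as [c [_ Hc]].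
      intros; apply Derive_correct, Hder.
      intros; apply cont_Rle, (x_cont x Hder).
      replace (xi x j t) with (xi x j 0 + v j c * (t - 0)) by lra.
      eapply Rle_trans. apply Rabs_triang. rewrite Rabs_mult, Rminus_0_r.
      pose proof (HV c j Hj). pose proof (Rabs_pos (v j c)). pose proof (Rabs_pos t). nra. }
    destruct (Hcell X HX) as [i [Hi HXi]]. rewrite (yeps_cell N x HN i t X Hi HXi).
    eapply Rle_trans. apply conv_abs. apply lam_bound; auto.
    pose proof (HxB i ltac:(lia)). pose proof (HxB (S i) ltac:(lia)).
    pose proof (sumR_term (S N) _ i Hnn ltac:(lia)). pose proof (sumR_term (S N) _ (S i) Hnn ltac:(lia)).
    cbv beta in *. lra.
  -
    exists (2 * V). intros t X HX.
    destruct (Hcell X HX) as [i [Hi HXi]]. rewrite (dyeps_cell N x HN Hder i t X Hi HXi).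
    eapply Rle_trans. apply conv_abs. apply lam_bound; auto.
    pose proof (HV t i ltac:(lia)). pose proof (HV t (S i) ltac:(lia)). unfold v in *. lra.
  -
    intros t.
    assert (Hlam : forall i X, INR i * e < X < INR (S i) * e -> 0 <= (X - INR i * e) / e <= 1).
    { intros i X HX. apply lam_bound; auto; lra. }
    assert (B1 : LnormQ 2 (fun X => Derive (fun s0 => yeps N x s0 X) t) <= 1 + 4 * Rabs E0 / rho).
    { assert (0 <= 4 * Rabs E0 / rho). { apply Rmult_le_pos. pose proof (Rabs_pos E0); lra. left; apply Rinv_0_lt_compat; lra. }
      rewrite <- (Rmax_right 0 (4 * Rabs E0 / rho)) by auto. apply LnormQ_le. lra.
      rewrite <- Htot. eapply Rle_trans. eapply proj2. apply ((int_cells e He _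
        (fun i X => (v i t + (X - INR i * e) / e * (v (S i) t - v i t)) ^ 2)
        (fun i => v i t ^ 2 + v (S i) t ^ 2) N)).
      + intros i X Hi HX. apply (ex_derive_continuous (K:=R_AbsRing) (V:=R_NormedModule)). auto_derive. lra.
      + intros i X Hi HX. rewrite powr_abs2. rewrite (dyeps_cell N x HN Hder i t X Hi (conj (Rlt_le _ _ (proj1 HX)) (proj2 HX))). reflexivity.
      + intros i X Hi HX. apply conv_sq. auto.
      + rewrite (sumR_ext N _ (fun i => e * v i t ^ 2 + e * v (S i) t ^ 2)) by (intros; ring).
        rewrite sumR_plus. pose proof (sumR_shift N (fun i => e * v i t ^ 2)) as Hs. cbv beta in Hs.
        rewrite Hvper in Hs. pose proof (HK1 t). lra. }
    assert (B2 : LnormQ p (fun X => Derive (fun Z => yeps N x t Z) X) <= 1 + K).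
    { rewrite <- (Rmax_right 0 K) by lra. apply LnormQ_le. lra.
      rewrite <- Htot. eapply Rle_trans. eapply proj2. apply ((int_cells e He _
        (fun i X => powr (Rabs (s i t)) p) (fun i => powr (Rabs (s i t)) p) N)).
      + intros; apply continuous_const.
      + intros i X Hi HX. rewrite (dXyeps_cell N x HN i t X Hi HX). reflexivity.
      + intros; lra.
      + apply HP. }
    assert (B3 : LnormQ 2 (fun X => Derive (fun s0 => ytil N x s0 X) t) <= 1 + 2 * Rabs E0 / rho).
    { assert (0 <= 2 * Rabs E0 / rho). { apply Rmult_le_pos. pose proof (Rabs_pos E0); lra. left; apply Rinv_0_lt_compat; lra. }
      rewrite <- (Rmax_right 0 (2 * Rabs E0 / rho)) by auto. apply LnormQ_le. lra.
      rewrite <- Htot. eapply Rle_trans. eapply proj2. apply ((int_cells e He _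
        (fun i X => v i t ^ 2) (fun i => v i t ^ 2) N)).
      + intros; apply continuous_const.
      + intros i X Hi HX. rewrite powr_abs2. rewrite (dytil_cell N x HN i t X Hi (conj (Rlt_le _ _ (proj1 HX)) (proj2 HX))). reflexivity.
      + intros; lra.
      + apply HK1. }
    assert (0 <= Rabs E0 / rho). { apply Rmult_le_pos. apply Rabs_pos. left; apply Rinv_0_lt_compat; lra. }
    replace (4 * Rabs E0 / rho) with (4 * (Rabs E0 / rho)) in B1 by (field; lra).
    replace (2 * Rabs E0 / rho) with (2 * (Rabs E0 / rho)) in B3 by (field; lra).
    replace (6 * Rabs E0 / rho) with (6 * (Rabs E0 / rho)) by (field; lra).
    lra.
  -
    intros t.
    set (d := fun i => xi x (S i) t - xi x i t).
    assert (HR : RInt (fun X => powr (Rabs (ytil N x t X - yeps N x t X)) p) 0 (2 * PI) <= Rpower e p * K).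
    { rewrite <- Htot. eapply Rle_trans. eapply proj2. apply ((int_cells e He _
        (fun i X => powr (Rabs ((X - INR i * e) / e * d i)) p) (fun i => powr (Rabs (d i)) p) N)).
      + intros i X Hi HX. apply continuous_comp with (g := fun u => powr u p).
        apply continuous_comp with (g := Rabs).
        apply (ex_derive_continuous (K:=R_AbsRing) (V:=R_NormedModule)). auto_derive. lra.
        apply continuous_Rabs. apply powr_cont. lra.
      + intros i X Hi HX. assert (HX' := conj (Rlt_le _ _ (proj1 HX)) (proj2 HX)).
        rewrite (ytil_cell N x HN i t X Hi HX'), (yeps_cell N x HN i t X Hi HX').
        rewrite <- Rabs_Ropp. f_equal. f_equal. unfold d. change (epsN N) with e. ring.
      + intros i X Hi HX. apply powr_mono. lra. rewrite Rabs_mult.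
        assert (Hl : 0 <= (X - INR i * e) / e <= 1) by (apply lam_bound; auto; lra).
        rewrite (Rabs_right ((X - INR i * e) / e)) by lra. pose proof (Rabs_pos (d i)). nra.
      + rewrite (sumR_ext N _ (fun i => Rpower e p * (e * powr (Rabs (s i t)) p))).
        rewrite sumR_scal. apply Rmult_le_compat_l. unfold Rpower; left; apply exp_pos. apply HP.
        intros i Hi. replace (d i) with (e * s i t) by (unfold d, s; field; lra).
        rewrite Rabs_mult, (Rabs_right e) by lra. rewrite powr_mul; auto. ring. apply Rabs_pos. }
    unfold LnormQ. eapply Rle_trans. apply powr_mono. 2: exact HR.
    left; apply Rdiv_lt_0_compat; lra.
    rewrite powr_root; auto; try lra. eapply Rle_trans. apply Rmult_le_compat_l. lra.
    apply powr_le_1plus. split. apply Rdiv_lt_0_compat; lra. apply Rmult_le_reg_r with p. lra.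
    unfold Rdiv; rewrite Rmult_assoc, Rinv_l; lra.
    rewrite Rmax_right by lra.
    assert (0 <= Rabs E0 / rho). { apply Rmult_le_pos. apply Rabs_pos. left; apply Rinv_0_lt_compat; lra. }
    replace (6 * Rabs E0 / rho) with (6 * (Rabs E0 / rho)) by (field; lra).
    fold e. nra.
Qed.
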